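(* Let $n\ge 2$. For $T\in\mathrm{SYT}^{+k}((b,b))$ with $b\ge1$, $k\ge0$, $2b+k=n$, define the word $\alpha(T)$ as follows. The largest entry $n$ lies in the bottom-right cell; delete it. For $j=1,\dots,b$ let $A_j$ be the set in the top cell of column $j$ and $B_j$ the set in the bottom cell of column $j$ (with $n$ removed when $j=b$; $B_b$ may become empty). Then $\alpha(T)$ is the concatenation, for $j=1,\dots,b$ in order, of: the elements of $A_j\setminus\{\max A_j\}$ in increasing order, followed by the elements of $B_j$ in increasing order, followed by $\max A_j$. Then: (1) $\alpha$ is a bijection from $\bigsqcup_{b\ge1,k\ge0,\,2b+k=n}\mathrm{SYT}^{+k}((b,b))$ onto the set of $321$-avoiding permutations of $[n-1]$; (2) the set of entries in the top row of $T$ equals the set of values of the right-to-left minima of $\alpha(T)$; (3) if $T$ has $b$ columns, then $\alpha(T)$ has exactly $b-1$ inner valleys.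
   Context: $\mathrm{SYT}^{+k}(\lambda)$: for a partition $\lambda$ of $N$ and $k\ge 0$, the set of fillings $S$ of the cells of the Ferrers diagram of $\lambda$ by nonempty sets of positive integers forming a set partition of $[N+k]$, such that $\max S(u)<\min S(v)$ whenever $u\ne v$ and $u$ is weakly northwest of $v$. A permutation $\pi=\pi_1\cdots\pi_m$ is $321$-avoiding if there are no $i<j<l$ with $\pi_i>\pi_j>\pi_l$. $\pi_i$ is a right-to-left minimum if $\pi_i<\pi_j$ for all $j>i$. An inner valley of $\pi$ is an entry $\pi_j$ with $1<j<m$ and $\pi_{j-1}>\pi_j<\pi_{j+1}$. *)

(* Defs.v *)
From mathcomp Require Import all_boot.
From mathcomp Require Import finmap.
Set Implicit Arguments. Unset Strict Implicit. Unset Printing Implicit Defensive.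
Local Open Scope fset_scope.

(* A filling of a Ferrers diagram (English convention, row 0 on top):
   T is the list of rows, row r is the list of its cells (columns 0,1,...),
   each cell contains a finite set of naturals. *)
Definition filling := seq (seq {fset nat}).

Definition cell (T : filling) (r c : nat) : {fset nat} :=
  nth fset0 (nth [::] T r) c.

Definition in_diagram (lam : seq nat) (r c : nat) : bool :=
  (r < size lam) && (c < nth 0 lam r).

Definition SYTplus (lam : seq nat) (k : nat) (T : filling) : Prop :=
  let N := sumn lam in
  [/\ map size T = lam,
      (forall r c, in_diagram lam r c -> cell T r c != fset0),
      (forall r1 c1 r2 c2, in_diagram lam r1 c1 -> in_diagram lam r2 c2 ->
         (r1, c1) <> (r2, c2) -> cell T r1 c1 `&` cell T r2 c2 = fset0),
      (forall x, (1 <= x <= N + k) <->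
         exists r c, in_diagram lam r c /\ x \in cell T r c)
    &
      (forall r1 c1 r2 c2, in_diagram lam r1 c1 -> in_diagram lam r2 c2 ->
         (r1, c1) <> (r2, c2) -> r1 <= r2 -> c1 <= c2 ->
         forall x y, x \in cell T r1 c1 -> y \in cell T r2 c2 -> x < y)].

(* maximum of a finite set of naturals (0 for the empty set) *)
Definition fmax (A : {fset nat}) : nat := \max_(x <- A) x.

Definition incr (A : {fset nat}) : seq nat := sort leq A.

(* The word alpha(T) for a two-row filling T = [:: top; bottom] whose largest
   entry is n (n is passed explicitly).  For column j (0-based here):
   A_j = top cell, B_j = bottom cell (with n removed in the last column);
   output incr(A_j \ max A_j) ++ incr(B_j) ++ [max A_j]. *)
Definition alpha (n : nat) (T : filling) : seq nat :=
  let b := size (nth [::] T 0) in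
  flatten [seq
    let A := cell T 0 j in
    let B := if j == b.-1 then cell T 1 j `\ n else cell T 1 j in
    incr (A `\ fmax A) ++ incr B ++ [:: fmax A]
  | j <- iota 0 b].

(* words: p is a permutation of [m] = {1,...,m} in one-line notation *)
Definition is_perm_of (m : nat) (p : seq nat) : Prop := perm_eq p (iota 1 m).

Definition avoids321 (p : seq nat) : Prop :=
  forall i j l, i < j -> j < l -> l < size p ->
    ~ (nth 0 p j < nth 0 p i /\ nth 0 p l < nth 0 p j).

Definition rl_minima (p : seq nat) : seq nat :=
  [seq nth 0 p i | i <- iota 0 (size p) &
     all (fun j => nth 0 p i < nth 0 p j) (iota i.+1 (size p - i.+1))].

(* number of inner valleys: positions 1 < j < m (1-based), i.e. 0 < j < m-1
   (0-based), with p_{j-1} > p_j < p_{j+1} *)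
Definition inner_valleys (p : seq nat) : nat :=
  count (fun j => (nth 0 p j < nth 0 p j.-1) && (nth 0 p j < nth 0 p j.+1))
        (iota 1 (size p).-2).

(* Main.v *)
Require Import Defs.
From mathcomp Require Import all_boot.
From mathcomp Require Import finmap.
From mathcomp Require Import zify.
Set Implicit Arguments. Unset Strict Implicit. Unset Printing Implicit Defensive.

Definition col (c : seq nat * nat) : seq nat := rcons c.1 c.2.
Definition word (cs : seq (seq nat * nat)) : seq nat := flatten (map col cs).
Definition bot (c : seq nat * nat) : seq nat := [seq x <- c.1 | c.2 < x].

Fixpoint good (cs : seq (seq nat * nat)) : bool :=
  match cs with
  | [::] => true
  | c :: cs' => [&& sorted ltn c.1, (cs' != [::]) ==> (c.2 < last c.2 c.1),
       all (fun c' => all (fun y => c.2 < y) (col c')) cs',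
       all (fun c' => allrel ltn (bot c) (bot c')) cs' & good cs']
  end.

Definition tcol (c : seq nat * nat) : seq (nat * bool) :=
  [seq (x, x <= c.2) | x <- col c].
Definition tw cs := flatten (map tcol cs).
Definition trel (u v : nat * bool) : bool :=
  (u.2 ==> (u.1 < v.1)) && ((~~ u.2) && (~~ v.2) ==> (u.1 < v.1)).

Lemma map_tw cs : map fst (tw cs) = word cs.
Proof.
elim: cs => //= c cs IH; rewrite map_cat IH /tcol -map_comp map_id //.
Qed.

Lemma uniq_word_cons c cs : uniq (word (c :: cs)) ->
  [/\ uniq (col c), uniq (word cs) & forall x, x \in col c -> x \notin word cs].
Proof.
rewrite /= cat_uniq => /and3P [u1 /hasPn h u2]; split => // x xc.
by apply/negP => xw; move: (h x xw); rewrite xc.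
Qed.

Lemma pw_tcol c : sorted ltn c.1 -> c.2 \notin c.1 -> pairwise trel (tcol c).
Proof.
move=> so na; rewrite /tcol pairwise_map /col pairwise_rcons.
apply/andP; split.
  apply/allP => x xin /=; rewrite /trel /= leqnn /=.
  rewrite andbF /= andbT; apply/implyP => xa; rewrite ltn_neqAle xa andbT.
  by apply/eqP => E; move: na; rewrite -E xin.
move: so; rewrite sorted_pairwise; last exact: ltn_trans.
apply: sub_pairwise => x y xy; rewrite /trel /= (xy : x < y); by case: (_ <= _); case: (_ <= _).
Qed.

Lemma good_cons c cs : good (c :: cs) -> good cs.
Proof. by case/and5P. Qed.

Lemma pw_tw cs : good cs -> uniq (word cs) -> pairwise trel (tw cs).
Proof.
elim: cs => //= c cs IH /and5P [so lst alla allb gcs] U.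
have [uc uw dis] := uniq_word_cons U.
rewrite pairwise_cat IH // ?andbT.
have na : c.2 \notin c.1.
  by move: uc; rewrite /col -cats1 cat_uniq /= orbF andbT => /andP [_].
rewrite pw_tcol // andbT.
elim: cs {IH lst uw dis U} alla allb gcs => [|c' cs IH]; first by rewrite /= allrel0r.
move=> /= /andP [a1 a2] /andP [b1 b2] gcs.
rewrite allrel_catr IH ?andbT //; last exact: good_cons gcs.
rewrite /tcol allrel_mapl allrel_mapr.
apply/allrelP => x y xin yin /=; rewrite /trel /=.
have ay : c.2 < y by move/allP: a1; apply.
apply/andP; split; first by apply/implyP => xa; exact: leq_ltn_trans xa ay.
apply/implyP => /andP [xa ya].
have xb : x \in bot c.
  rewrite mem_filter ltnNge xa /=.
  by move: xin; rewrite /col mem_rcons inE => /orP [/eqP E|//]; rewrite E leqnn in xa.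
have yb : y \in bot c'.
  rewrite mem_filter ltnNge ya /=.
  by move: yin; rewrite /col mem_rcons inE => /orP [/eqP E|//]; rewrite E leqnn in ya.
by move/allrelP: b1; apply.
Qed.

Fixpoint Qr (s : seq (nat * bool)) : bool :=
  match s with
  | [::] => true
  | u :: s' => (u.2 || has (fun v => v.1 < u.1) s') && Qr s'
  end.

Lemma Qr_cat s1 s2 : Qr s1 -> Qr s2 -> Qr (s1 ++ s2).
Proof.
elim: s1 => //= u s1 IH /andP [h q] q2; rewrite IH // andbT has_cat.
by case/orP: h => ->; rewrite ?orbT.
Qed.

Lemma Qr_tcol c : Qr (tcol c).
Proof.
rewrite /tcol /col; case: c => s a /=.
elim: s => /= [|x s IH]; first by rewrite leqnn.
rewrite IH andbT; case: leqP => //= ax.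
apply/hasP; exists (a, a <= a); last by [].
by apply/mapP; exists a => //; rewrite mem_rcons mem_head.
Qed.

Lemma Qr_tw cs : Qr (tw cs).
Proof. by elim: cs => //= c cs IH; apply: Qr_cat => //; apply: Qr_tcol. Qed.

Lemma rl_key s i : pairwise trel s -> Qr s -> i < size s ->
  all (fun v => (nth (0, false) s i).1 < v.1) (drop i.+1 s) = (nth (0, false) s i).2.
Proof.
elim: s i => // u s IH [|i] /= /andP [pa ps] /andP [q qs] lt; last first.
  by rewrite IH.
rewrite drop0; case: (boolP u.2) => u2.
  apply/allP => v vin; move/allP: pa => /(_ v vin); rewrite /trel u2 /=.
  by case/andP.
move: q; rewrite (negbTE u2) /= => /hasP [v vin vu].
apply/negbTE/negP => /allP /(_ v vin); rewrite ltnNge ltnW //.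
Qed.

Lemma avoid_tw s : pairwise trel s -> avoids321 (map fst s).
Proof.
move=> pw i j l ij jl; rewrite size_map => ls [].
have js : j < size s by apply: ltn_trans ls.
have is' : i < size s by apply: ltn_trans js.
rewrite !(nth_map (0, false)) //.
have h1 := (pairwiseP (0, false) pw i j is' js ij).
have h2 := (pairwiseP (0, false) pw j l js ls jl).
move: h1 h2; rewrite /trel.
case: (nth _ s i) => x tx; case: (nth _ s j) => y ty; case: (nth _ s l) => z tz /=.
case: tx; case: ty => /=; try lia.
Qed.

Lemma all_iota_drop (p : seq nat) i :
  all (fun j => nth 0 p i < nth 0 p j) (iota i.+1 (size p - i.+1)) =
  all (fun y => nth 0 p i < y) (drop i.+1 p).
Proof.
rewrite -[in RHS](take_oversize (leqnn (size (drop i.+1 p)))) size_drop.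
by rewrite -(map_nth_iota 0) // all_map.
Qed.

Lemma rl_tw s x : pairwise trel s -> Qr s ->
  (x \in rl_minima (map fst s)) = ((x, true) \in s).
Proof.
move=> pw q; apply/idP/idP.
  case/mapP => i; rewrite mem_filter mem_iota add0n size_map => /andP [al /andP [_ ilt]] ->.
  have : all (fun v => (nth (0, false) s i).1 < v.1) (drop i.+1 s).
    move: al; rewrite -(size_map fst) all_iota_drop -map_drop all_map.
    by apply: sub_all => v /=; rewrite (nth_map (0, false)).
  rewrite rl_key // (nth_map (0, false)) // => t.
  have := mem_nth (0, false) ilt; case: (nth _ s i) t => a b /= -> //.
move=> xin; have ilt : index (x, true) s < size s by rewrite index_mem.
have nt := nth_index (0, false) xin.
apply/mapP; exists (index (x, true) s); last by rewrite (nth_map (0, false)) // nt.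
rewrite mem_filter mem_iota add0n size_map ilt andbT.
rewrite -(size_map fst) all_iota_drop -map_drop all_map (nth_map (0, false)) // nt.
have := rl_key pw q ilt; rewrite nt /= => al.
by rewrite andbT; apply: sub_all al => v /=.
Qed.

Fixpoint vc (s : seq nat) : nat :=
  match s with
  | x :: ((y :: z :: _) as t) => ((y < x) && (y < z)) + vc t
  | _ => 0
  end.

Lemma vc_lt x y t : x < y -> vc (x :: y :: t) = vc (y :: t).
Proof. by case: t => // z t xy /=; rewrite ltnNge (ltnW xy). Qed.

Lemma vc_rcons s a : sorted ltn s -> vc (rcons s a) = 0.
Proof.
elim: s => // x [|x' s] IH // /andP [xx' so].
by rewrite vc_lt // -[x' :: rcons s a]/(rcons (x' :: s) a) IH.
Qed.

Lemma vc_desc s a y t : sorted ltn s -> a < last a s -> a < y ->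
  vc (rcons s a ++ y :: t) = (vc (y :: t)).+1.
Proof.
elim: s => [|x [|x' s] IH]; first by move=> _ /=; rewrite ltnn.
  move=> _ ax ay; transitivity ((a < x) && (a < y) + vc (a :: y :: t)); first by [].
  by rewrite (ax : a < x) ay vc_lt.
move=> /andP [xx' so] al ay.
change (vc (x :: (x' :: rcons s a ++ y :: t)) = (vc (y :: t)).+1); rewrite vc_lt //; exact: IH.
Qed.

Lemma iv_vc p : inner_valleys p = vc p.
Proof.
elim: p => // x p IH; case: p IH => [|y [|z t]] IH //.
rewrite (_ : vc (x :: y :: z :: t) = (y < x) && (y < z) + vc (y :: z :: t)) //.
rewrite -IH /inner_valleys.
change (size [:: x, y, z & t]).-2 with (size t).+1.
change (size [:: y, z & t]).-2 with (size t).
change (iota 1 (size t).+1) with (1 :: iota 2 (size t)).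
rewrite [count _ (1 :: _)]/= -[2]/(1 + 1) iotaDl count_map; congr (_ + _).
apply: eq_in_count => j; rewrite mem_iota => /andP [j1 _] /=.
by case: j j1.
Qed.

Lemma vc_word cs : good cs -> vc (word cs) = (size cs).-1.
Proof.
elim: cs => // c [|c' cs] IH /and5P [so lst alla allb gcs].
  by change (vc (col c ++ [::]) = 0); rewrite cats0 vc_rcons.
change (vc (col c ++ word (c' :: cs)) = (size cs).+1).
move: (alla) => /andP [ac' _]; rewrite /col in ac'; rewrite /= in lst.
have := IH gcs; rewrite /word /= /col.
case E: (rcons c'.1 c'.2) ac' => [|y t]; first by case: (c'.1) E.
move=> /andP [ay _]; rewrite [(y :: t) ++ _]/= => IH'.
by rewrite vc_desc // IH'.
Qed.

Fixpoint fb (s : seq nat) : seq nat * nat * seq nat :=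
  match s with
  | [::] => ([::], 0, [::])
  | [:: x] => ([::], x, [::])
  | x :: ((y :: s'') as s') =>
      if y < x then ([:: x], y, s'')
      else let: (bd, a, r) := fb s' in (x :: bd, a, r)
  end.

Fixpoint blocks_f (f : nat) (s : seq nat) : seq (seq nat * nat) :=
  match f with
  | 0 => [::]
  | f'.+1 => match s with
             | [::] => [::]
             | _ => let: (bd, a, r) := fb s in (bd, a) :: blocks_f f' r
             end
  end.

Definition blocks (s : seq nat) := blocks_f (size s) s.

Lemma fb_spec s : s != [::] -> let: (bd, a, r) := fb s in
  [/\ s = rcons bd a ++ r, sorted leq bd & (r != [::] -> a < last a bd)].
Proof.
elim: s => // x [|y s] IH _ //.
have -> : fb [:: x, y & s] = if y < x then ([:: x], y, s) else
  let: (bd, a, r) := fb (y :: s) in (x :: bd, a, r) by [].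
case: ifP => yx; first by split => //.
move: IH => /(_ isT); case: (fb (y :: s)) => [[bd a] r] [E so lst].
split; first by rewrite E.
  case: bd E so {lst} => // z bd [E' _] so /=; rewrite -E' leqNgt yx /=; rewrite E'; exact: so.
move=> rn; case: bd E so lst => [|z bd] E so lst /=; last exact: lst.
by move: (lst rn); rewrite ltnn.
Qed.

Lemma fb_cons2 x y s : fb (x :: y :: s) = if y < x then ([:: x], y, s) else
  let: (bd, a, r) := fb (y :: s) in (x :: bd, a, r).
Proof. by []. Qed.

Lemma fb_col bd a r : sorted ltn bd -> (r != [::] -> a < last a bd) ->
  fb (rcons bd a ++ r) = (bd, a, r).
Proof.
elim: bd => [|x bd IH].
  by case: r => // y r _ /(_ isT); rewrite ltnn.
move=> so lst.
case: bd IH so lst => [|x' bd] IH so lst.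
  clear IH; rewrite fb_cons2; case: ifP => // ax.
  case: r lst => [|y r] lst //=.
  by move: (lst isT); rewrite ax.
move: so => /andP [xx' so].
rewrite fb_cons2 ltnNge (ltnW xx') IH //.
Qed.

Lemma blocks_nil f : blocks_f f [::] = [::].
Proof. by case: f. Qed.

Lemma size_word cs : size cs <= size (word cs).
Proof.
elim: cs => // c cs IH; change ((size cs).+1 <= size (col c ++ word cs)); rewrite size_cat /col size_rcons; lia.
Qed.

Lemma blocks_word_f f cs : size cs <= f -> good cs -> blocks_f f (word cs) = cs.
Proof.
elim: cs f => [|c cs IH] [|f] //.
move=> sz /and5P [so lst _ _ gcs].
change (blocks_f f.+1 (rcons c.1 c.2 ++ word cs) = c :: cs).
case E: (rcons c.1 c.2 ++ word cs) => [|z t].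
  by case: (c.1) E.
change ((let: (bd, a, r) := fb (z :: t) in (bd, a) :: blocks_f f r) = c :: cs).
rewrite -E fb_col //; last first.
  move=> wn; apply: (implyP lst); apply: contra wn => /eqP -> //.
by rewrite IH //; case: c {E so lst sz}.
Qed.

Lemma blocks_word cs : good cs -> blocks (word cs) = cs.
Proof. by move=> g; rewrite /blocks blocks_word_f // size_word. Qed.

Lemma word_blocks_f f s : size s <= f -> word (blocks_f f s) = s.
Proof.
elim: f s => [|f IH] [|x s] // sz.
have H := fb_spec (s := x :: s) isT.
change (word (let: (bd, a, r) := fb (x :: s) in (bd, a) :: blocks_f f r) = x :: s).
move: H.
case: (fb (x :: s)) => [[bd a] r] [E _ _].
change (col (bd, a) ++ word (blocks_f f r) = x :: s).
rewrite IH; first by rewrite /col -E.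
move: sz; rewrite E size_cat size_rcons; lia.
Qed.

Lemma word_blocks s : word (blocks s) = s.
Proof. exact: word_blocks_f. Qed.

Lemma avoid_suffix s1 s2 : avoids321 (s1 ++ s2) -> avoids321 s2.
Proof.
move=> av i j l ij jl ls.
have := av (size s1 + i) (size s1 + j) (size s1 + l).
rewrite !nth_cat size_cat !ltnNge !leq_addr /= !addKn; apply; lia.
Qed.

Lemma avoid_cat3 s1 s2 s3 x y z : avoids321 (s1 ++ s2 ++ s3) ->
  x \in s1 -> y \in s2 -> z \in s3 -> ~ (y < x /\ z < y).
Proof.
move=> av xi yi zi.
have ix : index x s1 < size s1 by rewrite index_mem.
have iy : index y s2 < size s2 by rewrite index_mem.
have iz : index z s3 < size s3 by rewrite index_mem.
have e1 : nth 0 (s1 ++ s2 ++ s3) (index x s1) = x by rewrite nth_cat ix nth_index.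
have e2 : nth 0 (s1 ++ s2 ++ s3) (size s1 + index y s2) = y.
  by rewrite nth_cat ltnNge leq_addr /= addKn nth_cat iy nth_index.
have e3 : nth 0 (s1 ++ s2 ++ s3) (size s1 + (size s2 + index z s3)) = z.
  rewrite nth_cat ltnNge leq_addr /= addKn nth_cat ltnNge leq_addr /= addKn nth_index //.
have := av (index x s1) (size s1 + index y s2) (size s1 + (size s2 + index z s3)).
rewrite e1 e2 e3 !size_cat; apply; lia.
Qed.

Lemma good_blocks_f f s : size s <= f -> uniq s -> avoids321 s -> good (blocks_f f s).
Proof.
elim: f s => [|f IH] [|x s] // sz us av.
have H := fb_spec (s := x :: s) isT.
change (good (let: (bd, a, r) := fb (x :: s) in (bd, a) :: blocks_f f r)).
move: H; case: (fb (x :: s)) => [[bd a] r] [E so lst].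
rewrite E in sz us av.
have szr : size r <= f by move: sz; rewrite size_cat size_rcons addSn ltnS => h; apply: leq_trans h; apply: leq_addl.
have wr : word (blocks_f f r) = r by apply: word_blocks_f.
move: us; rewrite cat_uniq => /and3P [ubd /hasPn dis ur].
have ur' := ur; move: ubd; rewrite rcons_uniq => /andP [abd ubd].
have av' : avoids321 (bd ++ [:: a] ++ r) by rewrite catA cats1.
have ra : forall z, z \in r -> a < z.
  move=> z zr; have rn : r != [::] by case: (r) zr.
  have al := lst rn.
  have wb : last a bd \in bd.
    move: (mem_last a bd); rewrite inE => /orP [/eqP E'|//].
    by rewrite E' ltnn in al.
  have := avoid_cat3 av' wb (mem_head a [::]) zr.
  have az : a != z.
    by apply/eqP => az; move: (dis z zr); rewrite -az mem_rcons mem_head.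
  move=> h; case: (ltngtP a z) => // [za|E']; first by case: h.
  by rewrite E' eqxx in az.
apply/and5P; split.
- by rewrite ltn_sorted_uniq_leq ubd.
- apply/implyP => bn; apply: lst; apply: contra bn => /eqP ->; by rewrite blocks_nil.
- apply/allP => c' cin; apply/allP => y yin; apply: ra; rewrite -wr.
  by apply/flattenP; exists (col c') => //; apply/mapP; exists c'.
- apply/allP => c' cin; apply/allrelP => v w; rewrite !mem_filter /= => /andP [ava vb] /andP [cw wc].
  have cm : col c' \in map col (blocks_f f r) by apply/mapP; exists c'.
  set L := map col (blocks_f f r) in cm.
  have Er : L = take (index (col c') L) L ++ col c' :: drop (index (col c') L).+1 L.
    by rewrite -{1}(cat_take_drop (index (col c') L) L) (drop_nth [::]) ?index_mem ?nth_index.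
  have Er' : r = flatten (take (index (col c') L) L) ++ col c' ++
                 flatten (drop (index (col c') L).+1 L).
    by rewrite -wr /word -/L {1}Er flatten_cat.
  set r1 := take _ L in Er'; set r2 := drop _ L in Er'.
  have av2 : avoids321 (bd ++ ([:: a] ++ flatten r1 ++ c'.1) ++ (c'.2 :: flatten r2)).
    by move: av'; rewrite Er' /col -cats1 -!catA.
  have wm : w \in [:: a] ++ flatten r1 ++ c'.1 by rewrite !mem_cat wc !orbT.
  have := avoid_cat3 av2 vb wm (mem_head _ _).
  have vw : v != w.
    apply/eqP => E'; have wr' : w \in r by rewrite Er' !mem_cat /col mem_rcons inE wc !orbT.
    by move: (dis w wr'); rewrite -E' mem_rcons inE vb orbT.
  move: vw cw; rewrite neq_ltn; case/orP => // wv cw []; split => //.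
- apply: IH => //; exact: avoid_suffix av.
Qed.

Lemma good_blocks s : uniq s -> avoids321 s -> good (blocks s).
Proof. by move=> us av; apply: good_blocks_f. Qed.

Local Open Scope fset_scope.

Definition fs (s : seq nat) : {fset nat} := seq_fset tt s.
Lemma in_fs x s : (x \in fs s) = (x \in s).
Proof. exact: seq_fsetE. Qed.

Lemma fmaxE (A : {fset nat}) a : a \in A -> (forall y, y \in A -> y <= a) -> fmax A = a.
Proof.
move=> aA h; apply/eqP; rewrite eqn_leq; apply/andP; split.
  by apply/bigmax_leqP_seq => i iA _; apply: h.
by apply: leq_bigmax_seq.
Qed.

Lemma incrE (A : {fset nat}) s : sorted ltn s -> A =i s -> incr A = s.
Proof.
move=> so As; apply: (irr_sorted_eq ltn_trans ltnn) => //.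
  rewrite ltn_sorted_uniq_leq sort_uniq sort_sorted ?andbT //; last exact: leq_total.
  exact: fset_uniq.
by move=> x; rewrite mem_sort As.
Qed.

Definition c0 : seq nat * nat := ([::], 0).
Definition topc (c : seq nat * nat) := [seq x <- col c | x <= c.2].
Definition fill (n : nat) (cs : seq (seq nat * nat)) : filling :=
  [:: mkseq (fun j => fs (topc (nth c0 cs j))) (size cs);
      mkseq (fun j => fs (bot (nth c0 cs j)) `|`
                      (if j == (size cs).-1 then [fset n] else fset0)) (size cs)].

Lemma cell_fill0 n cs j : j < size cs -> cell (fill n cs) 0 j = fs (topc (nth c0 cs j)).
Proof. by move=> js; rewrite /cell /= nth_mkseq. Qed.

Lemma cell_fill1 n cs j : j < size cs -> cell (fill n cs) 1 j =
  fs (bot (nth c0 cs j)) `|` (if j == (size cs).-1 then [fset n] else fset0).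
Proof. by move=> js; rewrite /cell /= nth_mkseq. Qed.

Lemma good_nth cs j : good cs -> j < size cs ->
  [/\ sorted ltn (nth c0 cs j).1,
      (j.+1 < size cs -> (nth c0 cs j).2 < last (nth c0 cs j).2 (nth c0 cs j).1),
      (forall j', j < j' -> j' < size cs -> all (fun y => (nth c0 cs j).2 < y) (col (nth c0 cs j')))
    & (forall j', j < j' -> j' < size cs -> allrel ltn (bot (nth c0 cs j)) (bot (nth c0 cs j')))].
Proof.
elim: cs j => // c cs IH [|j] /= /and5P [so lst alla allb gcs] js; last first.
  have [h1 h2 h3 h4] := IH j gcs js.
  split => //.
  - move=> [|j'] // jj' j's; exact: h3.
  - move=> [|j'] // jj' j's; exact: h4.
split => //.
- by case: cs {IH alla allb gcs} lst js.
- move=> [|j'] // _ j's; by move/all_nthP: alla; apply.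
- move=> [|j'] // _ j's; by move/all_nthP: allb; apply.
Qed.

Lemma flatten_nthP (ss : seq (seq nat)) x :
  reflect (exists2 j, j < size ss & x \in nth [::] ss j) (x \in flatten ss).
Proof.
apply: (iffP flattenP) => [[s sin xs]|[j js xs]].
  by exists (index s ss); rewrite ?index_mem // nth_index.
by exists (nth [::] ss j) => //; apply: mem_nth.
Qed.

Lemma uniq_flatten_nth (ss : seq (seq nat)) j1 j2 x : uniq (flatten ss) ->
  j1 < size ss -> j2 < size ss -> x \in nth [::] ss j1 -> x \in nth [::] ss j2 -> j1 = j2.
Proof.
elim: ss j1 j2 => // s ss IH [|j1] [|j2] //=; rewrite cat_uniq => /and3P [_ /hasPn h u] /=.
- move=> _ j2s xs xs2; have : x \in flatten ss by apply/flatten_nthP; exists j2.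
  by move=> /h; rewrite xs.
- move=> j1s _ xs2 xs; have : x \in flatten ss by apply/flatten_nthP; exists j1.
  by move=> /h; rewrite xs.
- by move=> j1s j2s x1 x2; congr S; apply: IH x1 x2.
Qed.

Lemma uniq_flatten_nth1 (ss : seq (seq nat)) j : uniq (flatten ss) -> j < size ss ->
  uniq (nth [::] ss j).
Proof.
elim: ss j => // s ss IH [|j] /=; rewrite cat_uniq => /and3P [u1 _ u2] //.
exact: IH.
Qed.

Lemma nth_word cs j : j < size cs -> nth [::] (map col cs) j = col (nth c0 cs j).
Proof. by move=> js; rewrite (nth_map c0). Qed.

Lemma split_sorted s a : sorted ltn s -> a \notin s ->
  [seq x <- s | x < a] ++ [seq x <- s | a < x] = s.
Proof.
elim: s => //= x s IH so; rewrite inE negb_or => /andP [xa na].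
have so' : sorted ltn s by move: so; case: (s) => //= y t /andP [].
case: (ltngtP x a) => [xa'|ax|E]; last by rewrite E eqxx in xa.
  by rewrite /= IH.
have all_gt : all (fun y => x < y) s.
  exact: order_path_min ltn_trans so.
rewrite (_ : [seq x0 <- s | x0 < a] = [::]) /=; last first.
  apply/eqP; rewrite -(negbK (_ == _)) -has_filter; apply/hasPn => y ys.
  move/allP: all_gt => /(_ y ys) xy; rewrite -leqNgt; exact: ltnW (ltn_trans ax xy).
congr (_ :: _); apply/all_filterP; apply: sub_all all_gt => y; exact: ltn_trans.
Qed.

Lemma alpha_fill n cs : good cs -> uniq (word cs) -> n \notin word cs ->
  alpha n (fill n cs) = word cs.
Proof.
move=> g u nw.
rewrite /alpha [nth [::] (fill n cs) 0]/= size_mkseq /word.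
rewrite -[in RHS](mkseq_nth c0 cs) /mkseq -map_comp.
congr flatten; apply/eq_in_map => j; rewrite mem_iota add0n => /andP [_ js].
cbv beta zeta.
rewrite cell_fill0 // cell_fill1 //.
have [so _ _ _] := good_nth g js.
have uc : uniq (col (nth c0 cs j)).
  by rewrite -nth_word //; apply: uniq_flatten_nth1; rewrite ?size_map.
have cw : forall x, x \in col (nth c0 cs j) -> x \in word cs.
  move=> x xc; apply/flatten_nthP; exists j; rewrite ?size_map // nth_word //.
move: so uc cw; rewrite [col _]/= /=; set c := nth c0 cs j => so uc cw.
have na : c.2 \notin c.1 by move: uc; rewrite /col rcons_uniq => /andP [].
have fA : fmax (fs (topc c)) = c.2.
  apply: fmaxE; first by rewrite in_fs mem_filter leqnn /col mem_rcons mem_head.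
  by move=> y; rewrite in_fs mem_filter => /andP [].
rewrite fA.
have EA : incr (fs (topc c) `\ c.2) = [seq x <- c.1 | x < c.2].
  apply: incrE; first exact: sorted_filter ltn_trans _ _ so.
  move=> x; rewrite in_fsetD1 in_fs !mem_filter /col mem_rcons inE.
  by case: (ltngtP x c.2) => //= ->.
have EB : incr (if j == (size cs).-1
     then (fs (bot c) `|` (if j == (size cs).-1 then [fset n] else fset0)) `\ n
     else fs (bot c) `|` (if j == (size cs).-1 then [fset n] else fset0)) = bot c.
  apply: incrE; first exact: sorted_filter ltn_trans _ _ so.
  move=> x; case: (j == (size cs).-1); rewrite ?in_fsetD1 in_fsetU in_fs ?in_fset1 ?in_fset0 ?orbF //.
  case: (boolP (x \in bot c)) => xb; rewrite /= ?andbF ?orbF //.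
    rewrite andbT; apply/eqP => E; move: nw; rewrite -E cw //.
    by move: xb; rewrite mem_filter /col mem_rcons inE => /andP [_ ->]; rewrite orbT.
  by case: (x =P n).
rewrite EA EB catA split_sorted // /col cats1 //.
Qed.

Local Close Scope fset_scope.

Lemma mem_word cs x :
  reflect (exists2 j, j < size cs & x \in col (nth c0 cs j)) (x \in word cs).
Proof.
apply: (iffP (flatten_nthP _ _)) => [[j js xj]|[j js xj]].
  by rewrite size_map in js; exists j => //; rewrite -nth_word.
by exists j; rewrite ?size_map // nth_word.
Qed.

Lemma col_word cs j x : j < size cs -> x \in col (nth c0 cs j) -> x \in word cs.
Proof. by move=> js xc; apply/mem_word; exists j. Qed.

Lemma uniq_word_nth cs j1 j2 x : uniq (word cs) -> j1 < size cs -> j2 < size cs ->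
  x \in col (nth c0 cs j1) -> x \in col (nth c0 cs j2) -> j1 = j2.
Proof.
move=> u j1s j2s; rewrite -!nth_word //; apply: uniq_flatten_nth; rewrite ?size_map //.
Qed.

Lemma bot_col c x : x \in bot c -> (x \in col c) && (c.2 < x).
Proof. by rewrite mem_filter /col mem_rcons inE => /andP [-> ->]; rewrite orbT. Qed.

Lemma mem_cell0 n cs j x : j < size cs ->
  (x \in cell (fill n cs) 0 j) = (x \in col (nth c0 cs j)) && (x <= (nth c0 cs j).2).
Proof. by move=> js; rewrite cell_fill0 // in_fs mem_filter andbC. Qed.

Lemma mem_cell1 n cs j x : j < size cs ->
  (x \in cell (fill n cs) 1 j) = (x \in bot (nth c0 cs j)) || ((j == (size cs).-1) && (x == n)).
Proof.
move=> js; rewrite cell_fill1 // in_fsetU in_fs; congr (_ || _).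
by case: (j == _); rewrite ?in_fset1 ?in_fset0.
Qed.

Lemma indiag b r c : in_diagram [:: b; b] r c -> (r < 2) && (c < b).
Proof. by rewrite /in_diagram; case: r => [|[|r]] //=. Qed.

Lemma fset_ne0 (A : {fset nat}) x : x \in A -> A != fset0.
Proof. by move=> xA; apply/eqP => E; rewrite E in_fset0 in xA. Qed.

Lemma SYT_fill n k cs : good cs -> uniq (word cs) -> cs != [::] ->
  (forall x, (x \in word cs) = (0 < x) && (x < n)) -> 2 * size cs + k = n ->
  SYTplus [:: size cs; size cs] k (fill n cs).
Proof.
move=> g u csn memw nk.
set b := size cs.
have b0 : 0 < b by rewrite /b; case: (cs) csn.
have wn : forall x, x \in word cs -> x < n by move=> x; rewrite memw => /andP [].
have ltn_top : forall j x, j < b -> x \in cell (fill n cs) 0 j ->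
    (x \in col (nth c0 cs j)) && (x <= (nth c0 cs j).2).
  by move=> j x jb; rewrite mem_cell0.
split.
- by rewrite /= !size_mkseq.
- move=> r c /indiag /andP [r2 cb]; case: r r2 => [|[|r]] // _.
    apply: (@fset_ne0 _ (nth c0 cs c).2); rewrite mem_cell0 // leqnn andbT.
    by rewrite /col mem_rcons mem_head.
  case: (boolP (c == b.-1)) => cl.
    by apply: (@fset_ne0 _ n); rewrite mem_cell1 // cl eqxx orbT.
  have [_ h2 _ _] := good_nth g cb.
  have cb' : c.+1 < b by move: cl cb; rewrite /b; lia.
  have al := h2 cb'.
  apply: (@fset_ne0 _ (last (nth c0 cs c).2 (nth c0 cs c).1)); rewrite mem_cell1 //.
  rewrite mem_filter al /=.
  move: (mem_last (nth c0 cs c).2 (nth c0 cs c).1); rewrite inE => /orP [/eqP E|->] //.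
  by rewrite E ltnn in al.
- move=> r1 c1 r2 c2 /indiag /andP [r1l c1b] /indiag /andP [r2l c2b] neq.
  apply/fsetP => x; rewrite in_fsetI in_fset0; apply/negP => /andP [x1 x2].
  case: r1 r1l x1 neq => [|[|r1]] // _ x1 neq; case: r2 r2l x2 neq => [|[|r2]] // _ x2 neq.
  + move: x1 x2; rewrite !mem_cell0 // => /andP [x1 _] /andP [x2 _].
    by apply: neq; rewrite (uniq_word_nth u c1b c2b x1 x2).
  + move: x1 x2; rewrite mem_cell0 // mem_cell1 // => /andP [x1 xa] /orP [/bot_col /andP [x2 ax]|/andP [_ /eqP xn]].
      by rewrite (uniq_word_nth u c1b c2b x1 x2) in xa; move: (leq_ltn_trans xa ax); rewrite ltnn.
    by move: (wn x (col_word c1b x1)); rewrite xn ltnn.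
  + move: x1 x2; rewrite mem_cell0 // mem_cell1 // => /orP [/bot_col /andP [x2 ax]|/andP [_ /eqP xn]] /andP [x1 xa].
      by rewrite (uniq_word_nth u c2b c1b x1 x2) in xa; move: (leq_ltn_trans xa ax); rewrite ltnn.
    by move: (wn x (col_word c2b x1)); rewrite xn ltnn.
  + move: x1 x2; rewrite !mem_cell1 // => /orP [/bot_col /andP [x1 _]|/andP [/eqP e1 /eqP xn]]
                                          /orP [/bot_col /andP [x2 _]|/andP [/eqP e2 /eqP xn']].
    * by apply: neq; rewrite (uniq_word_nth u c1b c2b x1 x2).
    * by move: (wn x (col_word c1b x1)); rewrite xn' ltnn.
    * by move: (wn x (col_word c2b x2)); rewrite xn ltnn.
    * by apply: neq; rewrite e1 e2.
- move=> x; rewrite /= addn0; split.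
    move=> /andP [x1 xn]; case: (ltngtP x n) => [xn'||xn']; last 2 first.
    + move: xn; rewrite -nk /b; lia.
    + exists 1, b.-1; split; first by rewrite /in_diagram /=; lia.
      by rewrite mem_cell1 ?xn' ?eqxx ?orbT //; lia.
    have : x \in word cs by rewrite memw x1.
    case/mem_word => j jb xj.
    case: (leqP x (nth c0 cs j).2) => xa.
      by exists 0, j; split; [rewrite /in_diagram /=; lia | rewrite mem_cell0 // xj xa].
    exists 1, j; split; first by rewrite /in_diagram /=; lia.
    rewrite mem_cell1 // mem_filter xa /=.
    move: xj; rewrite /col mem_rcons inE => /orP [/eqP E|-> //].
    by rewrite E ltnn in xa.
  move=> [r [c [/indiag /andP [rl cb] xc]]].
  have : (x \in word cs) || (x == n).
    case: r rl xc => [|[|r]] // _; first by rewrite mem_cell0 // => /andP [/(col_word cb) ->].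
    by rewrite mem_cell1 // => /orP [/bot_col /andP [/(col_word cb) -> _]|/andP [_ ->]]; rewrite ?orbT.
  case/orP => [|/eqP ->]; first by rewrite memw => /andP [x0 xn]; apply/andP; split => //; lia.
  by apply/andP; split; lia.
- move=> r1 c1 r2 c2 /indiag /andP [r1l c1b] /indiag /andP [r2l c2b] neq r12 c12 x y.
  have [_ _ h3 h4] := good_nth g c1b.
  case: r1 r1l r12 neq => [|[|r1]] // _ r12 neq.
    rewrite mem_cell0 // => /andP [xc xa].
    case: r2 r2l r12 neq => [|[|r2]] // _ _ neq.
      have c12' : c1 < c2 by rewrite ltn_neqAle c12 andbT; apply/eqP => E; apply: neq; rewrite E.
      rewrite mem_cell0 // => /andP [yc _].
      by move/allP: (h3 c2 c12' c2b) => /(_ y yc); apply: leq_ltn_trans.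
    rewrite mem_cell1 // => /orP [yb|/andP [_ /eqP ->]]; last exact: wn (col_word c1b xc).
    case: (ltngtP c1 c2) c12 => // [c12'|E] _.
      move/bot_col: yb => /andP [yc _].
      by move/allP: (h3 c2 c12' c2b) => /(_ y yc); apply: leq_ltn_trans.
    by move/bot_col: yb => /andP [_]; rewrite -E; apply: leq_ltn_trans.
  case: r2 r2l r12 neq => [|[|r2]] // _ _ neq.
  have c12' : c1 < c2 by rewrite ltn_neqAle c12 andbT; apply/eqP => E; apply: neq; rewrite E.
  have c1l : (c1 == b.-1) = false by apply/negbTE; move: c12' c2b; rewrite /b; lia.
  rewrite mem_cell1 // c1l orbF => xb.
  rewrite mem_cell1 // => /orP [yb|/andP [_ /eqP ->]]; last first.
    by move/bot_col: xb => /andP [/(col_word c1b) /wn].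
  by move/allrelP: (h4 c2 c12' c2b) => /(_ x y xb yb).
Qed.

Lemma bigmax_mem (s : seq nat) : s != [::] -> \max_(x <- s) x \in s.
Proof.
elim: s => // x [|y s] IH _; first by rewrite big_cons big_nil maxn0 mem_head.
rewrite big_cons; case: (leqP x (\max_(z <- y :: s) z)) => h.
  by rewrite inE (IH isT) orbT.
by rewrite mem_head.
Qed.

Lemma fmax_mem (A : {fset nat}) : A != fset0 -> fmax A \in A.
Proof.
case/fset0Pn => x xA; rewrite /fmax; apply: bigmax_mem.
by apply/eqP => E; move: xA; rewrite -[x \in A]/(x \in enum_fset A) E.
Qed.

Lemma fmax_ge (A : {fset nat}) y : y \in A -> y <= fmax A.
Proof. by move=> yA; rewrite /fmax; apply: leq_bigmax_seq. Qed.

Lemma sorted_last s d y : sorted ltn s -> y \in s -> y <= last d s.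
Proof.
elim: s d => // x s IH d so; rewrite inE => /orP [/eqP ->|ys].
  case: s {IH} so => [|z s] so; first by [].
  have := order_path_min ltn_trans so.
  move=> /allP /(_ (last z s) (mem_last z s)) /ltnW h; exact: h.
have so' : sorted ltn s by move: so; case: (s) => //= z t /andP [].
exact: IH.
Qed.

Lemma good_of_nth cs :
  (forall j, j < size cs ->
  [/\ sorted ltn (nth c0 cs j).1,
      (j.+1 < size cs -> (nth c0 cs j).2 < last (nth c0 cs j).2 (nth c0 cs j).1),
      (forall j', j < j' -> j' < size cs -> all (fun y => (nth c0 cs j).2 < y) (col (nth c0 cs j')))
    & (forall j', j < j' -> j' < size cs -> allrel ltn (bot (nth c0 cs j)) (bot (nth c0 cs j')))]) ->
  good cs.
Proof.
elim: cs => // c cs IH h.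
have [so lst h3 h4] := h 0 isT.
apply/and5P; split => //.
- by apply/implyP; case: (cs) lst => // c' cs' /(_ isT).
- apply/(all_nthP c0) => j js; exact: (h3 j.+1).
- apply/(all_nthP c0) => j js; exact: (h4 j.+1).
- apply: IH => j js; have [a1 a2 a3 a4] := h j.+1 js; split => //.
  + move=> j' jj' j's; exact: (a3 j'.+1).
  + move=> j' jj' j's; exact: (a4 j'.+1).
Qed.

Lemma uniq_flatten_of_nth (ss : seq (seq nat)) :
  (forall j, j < size ss -> uniq (nth [::] ss j)) ->
  (forall j1 j2 x, j1 < j2 -> j2 < size ss -> x \in nth [::] ss j1 -> x \notin nth [::] ss j2) ->
  uniq (flatten ss).
Proof.
elim: ss => // s ss IH h1 h2 /=; rewrite cat_uniq (h1 0 isT) /=.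
rewrite IH ?andbT; last first.
- move=> j1 j2 x j12 j2s; exact: (h2 j1.+1 j2.+1).
- move=> j js; exact: (h1 j.+1).
apply/hasPn => x /flatten_nthP [j js xj]; apply/negP => xs.
by move: (h2 0 j.+1 x isT js xs); rewrite xj.
Qed.

Definition colT (n : nat) (T : filling) (j : nat) : seq nat * nat :=
  (incr (cell T 0 j `\ fmax (cell T 0 j))%fset ++ incr (cell T 1 j `\ n)%fset,
   fmax (cell T 0 j)).
Definition colsT n b T := mkseq (colT n T) b.

Lemma incr_sorted (A : {fset nat}) : sorted ltn (incr A).
Proof.
rewrite ltn_sorted_uniq_leq sort_uniq sort_sorted ?andbT; last exact: leq_total.
exact: fset_uniq.
Qed.

Lemma mem_incr (A : {fset nat}) x : (x \in incr A) = (x \in A).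
Proof. by rewrite mem_sort. Qed.

Lemma SYT_cols n b k T : 0 < b -> 2 * b + k = n -> SYTplus [:: b; b] k T ->
  [/\ good (colsT n b T), uniq (word (colsT n b T)), T = fill n (colsT n b T)
    & forall x, (x \in word (colsT n b T)) = (0 < x) && (x < n)].
Proof.
move=> b0 nk [hs hne hdis hcov hnw].
set cs := colsT n b T.
have sz : size cs = b by rewrite size_mkseq.
have nthcs : forall j, j < b -> nth c0 cs j = colT n T j by move=> j jb; rewrite nth_mkseq.
have ind : forall r j, r < 2 -> j < b -> in_diagram [:: b; b] r j.
  by move=> [|[|r]] j //= _ jb; rewrite /in_diagram /= jb.
have Ane : forall j, j < b -> (cell T 0 j) != fset0 by move=> j jb; apply: hne; apply: ind.
have Bne : forall j, j < b -> (cell T 1 j) != fset0 by move=> j jb; apply: hne; apply: ind.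
have cov1 : forall r j x, r < 2 -> j < b -> x \in cell T r j -> 0 < x /\ x <= n.
  move=> r j x r2 jb xc; have := (proj2 (hcov x)) (ex_intro _ r (ex_intro _ j (conj (ind r j r2 jb) xc))).
  move=> /andP [x1 xn]; split => //; move: xn; rewrite /= addn0 -nk; lia.
have dis : forall r1 j1 r2 j2 x, r1 < 2 -> j1 < b -> r2 < 2 -> j2 < b -> (r1, j1) <> (r2, j2) ->
    x \in cell T r1 j1 -> x \in cell T r2 j2 -> False.
  move=> r1 j1 r2 j2 x r1l j1b r2l j2b ne x1 x2.
  have := hdis r1 j1 r2 j2 (ind _ _ r1l j1b) (ind _ _ r2l j2b) ne.
  by move/fsetP => /(_ x); rewrite in_fsetI x1 x2 in_fset0.
have NW : forall r1 j1 r2 j2 x y, r1 < 2 -> j1 < b -> r2 < 2 -> j2 < b -> (r1, j1) <> (r2, j2) ->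
    r1 <= r2 -> j1 <= j2 -> x \in cell T r1 j1 -> y \in cell T r2 j2 -> x < y.
  move=> r1 j1 r2 j2 x y r1l j1b r2l j2b ne r12 j12; apply: hnw => //; exact: ind.
have bl : b.-1 < b by lia.
have nB : n \in (cell T 1 b.-1).
  have : 1 <= n <= sumn [:: b; b] + k by rewrite /= addn0 -nk; apply/andP; split; lia.
  move/hcov => [r [c [rc nc]]].
  have /andP [rl cb] := indiag rc.
  case/fset0Pn: (Bne _ bl) => y yB.
  case: (boolP ((r, c) == (1, b.-1))) => [/eqP [E1 E2]|/eqP ne]; first by move: nc; rewrite E1 E2.
  have cb' : c <= b.-1 by lia.
  have rl' : r <= 1 by lia.
  have ny := NW r c 1 b.-1 n y rl cb isT bl ne rl' cb' nc yB.
  have [_ yn] := cov1 1 b.-1 y isT bl yB; lia.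
have nA : forall j, j < b -> n \notin (cell T 0 j).
  move=> j jb; apply/negP => nA; apply: (dis 0 j 1 b.-1 n) => //.
have nB' : forall j, j < b -> j != b.-1 -> n \notin (cell T 1 j).
  move=> j jb jl; apply/negP => nBj; apply: (dis 1 j 1 b.-1 n) => //.
  by move=> [E]; rewrite E eqxx in jl.
have aA : forall j, j < b -> fmax ((cell T 0 j)) \in (cell T 0 j) by move=> j jb; apply: fmax_mem; apply: Ane.
have AB : forall j x y, j < b -> x \in (cell T 0 j) -> y \in (cell T 1 j) -> x < y.
  by move=> j x y jb xA yB; apply: (NW 0 j 1 j) => //; case.
have mem_body : forall j x, j < b -> (x \in (colT n T j).1) =
    ((x \in (cell T 0 j)) && (x != fmax ((cell T 0 j)))) || ((x \in (cell T 1 j)) && (x != n)).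
  by move=> j x jb; rewrite /colT /= mem_cat !mem_incr !in_fsetD1 andbC (andbC (x != n)).
have mem_col : forall j x, j < b -> (x \in col (colT n T j)) = (x \in (cell T 0 j)) || ((x \in (cell T 1 j)) && (x != n)).
  move=> j x jb; rewrite /col mem_rcons inE mem_body //.
  case: (x =P fmax ((cell T 0 j))) => [->|_] /=; first by rewrite aA.
  by rewrite andbT.
have so_body : forall j, j < b -> sorted ltn (colT n T j).1.
  move=> j jb; rewrite /colT /= (sorted_pairwise ltn_trans) pairwise_cat.
  apply/and3P; split; try by rewrite -(sorted_pairwise ltn_trans) incr_sorted.
  apply/allrelP => x y; rewrite !mem_incr !in_fsetD1 => /andP [_ xA] /andP [_ yB].
  exact: AB xA yB.
have bot_B : forall j x, j < b -> x \in bot (colT n T j) -> (x \in (cell T 1 j)) && (x != n).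
  move=> j x jb; rewrite mem_filter mem_body // => /andP [ax].
  case/orP => // /andP [xA _]; move: (fmax_ge xA) => h; simpl in ax; lia.
have gcs : good cs.
  apply: good_of_nth => j; rewrite sz => jb; rewrite nthcs //; split.
  - exact: so_body.
  - move=> jb'; have jl : j != b.-1 by lia.
    case/fset0Pn: (Bne _ jb) => y yB.
    have yn : y != n by apply: contraNneq (nB' j jb jl) => <-.
    have yb : y \in (colT n T j).1 by rewrite mem_body // yB yn orbT.
    apply: leq_trans (sorted_last _ (so_body j jb) yb); exact: AB (aA j jb) yB.
  - move=> j' jj' j'b; rewrite nthcs //; apply/allP => y; rewrite mem_col // => /orP [yA|/andP [yB _]].
      have ne : (0, j) <> (0, j') by case => E; lia.
      exact: (NW 0 j 0 j' _ y isT jb isT j'b ne isT (ltnW jj') (aA j jb) yA).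
    have ne : (0, j) <> (1, j') by case.
    exact: (NW 0 j 1 j' _ y isT jb isT j'b ne isT (ltnW jj') (aA j jb) yB).
  - move=> j' jj' j'b; rewrite nthcs //; apply/allrelP => x y /(bot_B _ _ jb) /andP [xB _].
    move=> /(bot_B _ _ j'b) /andP [yB _].
    have ne : (1, j) <> (1, j') by case => E; lia.
    exact: (NW 1 j 1 j' x y isT jb isT j'b ne isT (ltnW jj') xB yB).
have ucs : uniq (word cs).
  rewrite /word; apply: uniq_flatten_of_nth; rewrite size_map sz.
    move=> j jb; rewrite nth_word ?sz // nthcs // /col rcons_uniq.
    rewrite (sorted_uniq ltn_trans ltnn (so_body j jb)) andbT mem_body //.
    rewrite eqxx andbF /=; apply/negP => /andP [aB _].
    have ne : (0, j) <> (1, j) by case.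
    exact: (dis 0 j 1 j _ isT jb isT jb ne (aA j jb) aB).
  move=> j1 j2 x j12 j2b; have j1b : j1 < b by lia.
  rewrite !nth_word ?sz // !nthcs // !mem_col // => x1; apply/negP => x2.
  have [r1 [r1l xc1]] : exists r1, r1 < 2 /\ x \in cell T r1 j1.
    by case/orP: x1 => [xA|/andP [xB _]]; [exists 0 | exists 1].
  have [r2 [r2l xc2]] : exists r2, r2 < 2 /\ x \in cell T r2 j2.
    by case/orP: x2 => [xA|/andP [xB _]]; [exists 0 | exists 1].
  by apply: (dis r1 j1 r2 j2 x) => //; case => _ E; lia.
have memw : forall x, (x \in word cs) = (0 < x) && (x < n).
  move=> x; apply/idP/idP.
    case/mem_word => j; rewrite sz => jb; rewrite nthcs // mem_col // => /orP [xA|/andP [xB xn]].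
      have [x0 xn] := cov1 0 j x isT jb xA.
      rewrite x0 ltn_neqAle xn andbT; by apply: contraNneq (nA j jb) => <-.
    have [x0 xn'] := cov1 1 j x isT jb xB.
    by rewrite x0 ltn_neqAle xn.
  move=> /andP [x0 xn].
  have : 1 <= x <= sumn [:: b; b] + k by rewrite /= addn0; apply/andP; split; lia.
  move/hcov => [r [c [rc xc]]]; have /andP [rl cb] := indiag rc.
  apply/mem_word; exists c; rewrite ?sz // nthcs // mem_col //.
  case: r rl rc xc => [|[|r]] // _ _ xc; first by rewrite xc.
  by rewrite xc /=; move: xn; rewrite ltn_neqAle => /andP [-> _]; rewrite orbT.
split => //.
have [R0 [R1 [ET [s0 s1]]]] : exists R0 R1, T = [:: R0; R1] /\ size R0 = b /\ size R1 = b.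
  by case: (T) hs => [|R0 [|R1 [|R2 T']]] // [s0 s1]; exists R0, R1.
have c0j : forall j, cell T 0 j = nth fset0 R0 j by move=> j; rewrite /cell ET.
have c1j : forall j, cell T 1 j = nth fset0 R1 j by move=> j; rewrite /cell ET.
rewrite {1}ET /fill sz; congr [:: _; _]; apply: (@eq_from_nth _ fset0);
  rewrite ?size_mkseq // => j; rewrite ?s0 ?s1 => jb; rewrite !nth_mkseq // -?c0j -?c1j ?nthcs //;
  apply/fsetP => x.
  rewrite in_fs mem_filter mem_col //; apply/idP/idP => [xA|/andP [xa /orP [//|/andP [xB _]]]].
    by rewrite xA /= fmax_ge.
  by have := AB j _ _ jb (aA j jb) xB; rewrite ltnNge xa.
rewrite in_fsetU in_fs; apply/idP/idP => [xB|/orP [/(bot_B _ _ jb) /andP [] //|]]; last first.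
  by case: (j =P b.-1) => [->|_]; rewrite ?in_fset0 // in_fset1 => /eqP ->.
case: (x =P n) => [E|/eqP xn].
  case: (j =P b.-1) => [_|/eqP jl]; first by rewrite in_fset1 E eqxx orbT.
  by move: (nB' j jb jl); rewrite -E xB.
by rewrite mem_filter mem_body // xB xn orbT andbT (AB j _ _ jb (aA j jb) xB).
Qed.

Lemma size_word2 cs : good cs -> (size cs).*2 <= (size (word cs)).+1.
Proof.
elim: cs => // c cs IH /and5P [so lst _ _ gcs].
change (size (c :: cs)).*2 with (size cs).*2.+2.
change (word (c :: cs)) with (col c ++ word cs).
rewrite size_cat /col size_rcons.
have := IH gcs; case: cs {IH gcs} lst => [|c' cs] lst; first by rewrite /=; lia.
have : size c.1 > 0 by case: (c.1) lst => //=; rewrite ltnn.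
move=> h1 h2; lia.
Qed.

Lemma mem_tw cs x : ((x, true) \in tw cs) =
  has (fun c => (x \in col c) && (x <= c.2)) cs.
Proof.
elim: cs => //= c cs IH; rewrite mem_cat IH; congr (_ || _).
apply/mapP/andP => [[y yc [-> E]]|[xc xa]]; first by rewrite yc -E.
by exists x => //; rewrite xa.
Qed.

Lemma perm_mem_iota p n : 2 <= n -> is_perm_of n.-1 p -> forall x, (x \in p) = (0 < x) && (x < n).
Proof.
move=> hn pp x; rewrite (perm_mem pp) mem_iota; congr (_ && _); apply/idP/idP; lia.
Qed.

Unset Implicit Arguments.

Theorem theorem7 (n : nat) (hn : 2 <= n) :
  [/\ (* (1a) alpha maps the disjoint union of SYT^{+k}((b,b)), b>=1, 2b+k=n,
         into the 321-avoiding permutations of [n-1] *)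
      (forall (b k : nat) (T : filling), 1 <= b -> 2 * b + k = n ->
         SYTplus [:: b; b] k T ->
         is_perm_of n.-1 (alpha n T) /\ avoids321 (alpha n T)),
      (* (1b) injectivity on the disjoint union (elements are triples (b,k,T)) *)
      (forall (b1 k1 : nat) (T1 : filling) (b2 k2 : nat) (T2 : filling),
         1 <= b1 -> 2 * b1 + k1 = n -> SYTplus [:: b1; b1] k1 T1 ->
         1 <= b2 -> 2 * b2 + k2 = n -> SYTplus [:: b2; b2] k2 T2 ->
         alpha n T1 = alpha n T2 -> (b1, k1, T1) = (b2, k2, T2)),
      (* (1c) surjectivity *)
      (forall p : seq nat, is_perm_of n.-1 p -> avoids321 p ->
         exists (b k : nat) (T : filling), [/\ 1 <= b, 2 * b + k = n,
           SYTplus [:: b; b] k T & alpha n T = p]),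
      (* (2) top-row entries = values of right-to-left minima *)
      (forall (b k : nat) (T : filling), 1 <= b -> 2 * b + k = n ->
         SYTplus [:: b; b] k T ->
         forall x : nat, (exists c, c < b /\ x \in cell T 0 c) <->
                         x \in rl_minima (alpha n T))
    & (* (3) exactly b-1 inner valleys *)
      (forall (b k : nat) (T : filling), 1 <= b -> 2 * b + k = n ->
         SYTplus [:: b; b] k T -> inner_valleys (alpha n T) = b - 1)].
Proof.
have dec : forall b k T, 1 <= b -> 2 * b + k = n -> SYTplus [:: b; b] k T ->
    exists cs, [/\ good cs, uniq (word cs), T = fill n cs, size cs = b &
      (forall x, (x \in word cs) = (0 < x) && (x < n)) /\ alpha n T = word cs].
  move=> b k T hb hk HT; have [g u ET mw] := SYT_cols hb hk HT.
  have sz : size (colsT n b T) = b by rewrite size_mkseq.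
  move: (colsT n b T) g u ET mw sz => cs g u ET mw sz.
  exists cs; split => //; split => //; rewrite ET alpha_fill // mw ltnn andbF //.
split.
- move=> b k T hb hk HT; have [cs [g u ET sz [mw ->]]] := dec b k T hb hk HT.
  split; last by rewrite -map_tw; apply: avoid_tw; apply: pw_tw.
  apply: uniq_perm => //; first exact: iota_uniq.
  move=> x; rewrite mw mem_iota; apply/idP/idP; lia.
- move=> b1 k1 T1 b2 k2 T2 hb1 hk1 H1 hb2 hk2 H2.
  have [cs1 [g1 u1 ET1 sz1 [mw1 ->]]] := dec b1 k1 T1 hb1 hk1 H1.
  have [cs2 [g2 u2 ET2 sz2 [mw2 ->]]] := dec b2 k2 T2 hb2 hk2 H2.
  move=> E; have E' : cs1 = cs2 by rewrite -(blocks_word g1) -(blocks_word g2) E.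
  have eb : b1 = b2 by rewrite -sz1 -sz2 E'.
  have ek : k1 = k2 by lia.
  by rewrite ET1 ET2 E' eb ek.
- move=> p pp av.
  have up : uniq p by rewrite (perm_uniq pp) iota_uniq.
  have g := good_blocks up av.
  have wp := word_blocks p.
  set cs := blocks p in g wp.
  have mw : forall x, (x \in word cs) = (0 < x) && (x < n) by move=> x; rewrite wp (perm_mem_iota hn pp).
  have sp : size p = n.-1 by rewrite (perm_size pp) size_iota.
  have csn : cs != [::] by apply/eqP => E; move: sp; rewrite -wp E /=; lia.
  have s2 := size_word2 g; rewrite wp sp in s2.
  exists (size cs), (n - 2 * size cs), (fill n cs); split.
  + by case: (cs) csn.
  + lia.
  + apply: SYT_fill => //; [by rewrite wp | lia].
  + by rewrite alpha_fill ?wp // -wp mw ltnn andbF.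
- move=> b k T hb hk HT x; have [cs [g u ET sz [mw ->]]] := dec b k T hb hk HT.
  rewrite -map_tw rl_tw ?Qr_tw ?pw_tw // mem_tw ET; split.
    move=> [c [cb]]; rewrite -sz in cb; rewrite mem_cell0 // => h.
    by apply/hasP; exists (nth c0 cs c) => //; apply: mem_nth.
  case/hasP => c /(nthP c0) [j js <-] h; exists j; split; first by rewrite -sz.
  by rewrite mem_cell0.
- move=> b k T hb hk HT; have [cs [g u ET sz [mw ->]]] := dec b k T hb hk HT.
  by rewrite iv_vc vc_word // sz subn1.
Qed.
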